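(* Let $X$ and $Y$ be topological spaces, let $f: X \to X$ and $g: Y \to Y$ be maps, and let $\Phi: X \to \mathbb{R}^n$ and $\Psi: Y \to \mathbb{R}^n$ be probe functions. Suppose $h: X \to Y$ is continuous and surjective with $h \circ f = g \circ h$, and that $h$ is descriptively continuous. If the set of descriptive periodic objects of $f$ (with respect to $\Phi$) is dense in $X$, then the set of descriptive periodic objects of $g$ (with respect to $\Psi$) is dense in $Y$.
   Context: A probe function is an arbitrary function into $\mathbb{R}^n$; for $A \subseteq X$ write $\Phi(A) = \{\Phi(a) : a \in A\}$. Subsets $A, B \subseteq X$ are descriptively near, written $A \,\delta_{\Phi}\, B$, if $\Phi(A) \cap \Phi(B) \neq \emptyset$ (similarly $\delta_{\Psi}$ on $Y$). The map $h$ is descriptively continuous if $A \,\delta_{\Phi}\, B$ implies $h(A) \,\delta_{\Psi}\, h(B)$ for all $A, B \subseteq X$. An object $a \in X$ is a descriptive periodic object of $f$ if $\Phi(f^m(a)) = \Phi(a)$ for some integer $m \geq 1$; analogously $y \in Y$ is a descriptive periodic object of $g$ if $\Psi(g^m(y)) = \Psi(y)$ for some integer $m \geq 1$. *)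

(* Defs.v *)
From HB Require Import structures.
From mathcomp Require Import all_boot all_order all_algebra.
From mathcomp Require Import all_classical all_reals topology.
Set Implicit Arguments. Unset Strict Implicit. Unset Printing Implicit Defensive.
Local Open Scope classical_set_scope.

Definition descr_near (X V : Type) (Phi : X -> V) (A B : set X) : Prop :=
  Phi @` A `&` Phi @` B !=set0.

Definition descr_continuous (X Y V : Type) (Phi : X -> V) (Psi : Y -> V)
  (h : X -> Y) : Prop :=
  forall A B : set X, descr_near Phi A B -> descr_near Psi (h @` A) (h @` B).

Definition descr_periodic (X V : Type) (Phi : X -> V) (f : X -> X) (a : X) : Prop :=
  exists m : nat, (1 <= m)%N /\ Phi (iter m f a) = Phi a.

(* Main.v *)
Require Import Defs.
From HB Require Import structures.
From mathcomp Require Import all_boot all_order all_algebra.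
From mathcomp Require Import all_classical all_reals topology.
Local Open Scope classical_set_scope.

Theorem lemma4 (R : realType) (n : nat) (X Y : topologicalType)
  (f : X -> X) (g : Y -> Y) (Phi : X -> 'rV[R]_n) (Psi : Y -> 'rV[R]_n)
  (h : X -> Y) :
  continuous h -> (forall y : Y, exists x : X, h x = y) -> h \o f = g \o h ->
  descr_continuous Phi Psi h ->
  dense [set a | descr_periodic Phi f a] ->
  dense [set y | descr_periodic Psi g y].
Proof.
move=> hc hs hfg hd dP O [y Oy] oO.
have oP : open (h @^-1` O) by apply: open_comp => // x _; exact: hc.
have [x0 hx0] := hs y.
have ne : h @^-1` O !=set0 by exists x0; rewrite /preimage /= hx0.
have [x [Ox [m [m1 Hm]]]] := dP _ ne oP.
exists (h x); split => //.
have hit : forall k, h (iter k f x) = iter k g (h x).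
  elim=> [|k IH] //=; rewrite -IH.
  by have := congr1 (fun F => F (iter k f x)) hfg.
exists m; split => //.
have := hd [set iter m f x] [set x].
case.
  by exists (Phi x); split; [exists (iter m f x)|exists x].
move=> v [[a [b -> <-] <-]] [c [d -> <-] ]; by rewrite hit.
Qed.
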